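(* Let $q$ be a prime power and let $C\subseteq\mathrm{GF}(q^m)^n$ be a (linear or nonlinear) code with $n\le m$, $|C|=q^{mk}$ for an integer $1\le k\le n$, and minimum rank distance $d_{\mathrm R}=n-k+1$. Let $\mathcal K$ be any elementary linear subspace of $\mathrm{GF}(q^m)^n$ of dimension $k$ and $\bar{\mathcal K}$ any elementary linear subspace of dimension $n-k$ with $\mathcal K\oplus\bar{\mathcal K}=\mathrm{GF}(q^m)^n$. Then for every $\mathbf w\in\mathcal K$ there exists a unique codeword $\mathbf c\in C$ with $\mathbf c_{\mathcal K}=\mathbf w$, where $\mathbf c_{\mathcal K}$ denotes the projection of $\mathbf c$ onto $\mathcal K$ along $\bar{\mathcal K}$.
   Context: For $\mathbf x=(x_0,\dots,x_{n-1})\in\mathrm{GF}(q^m)^n$, $\mathrm{rk}(\mathbf x)$ is the dimension over $\mathrm{GF}(q)$ of the $\mathrm{GF}(q)$-span of $x_0,\dots,x_{n-1}$; the minimum rank distance of $C$ is the minimum of $\mathrm{rk}(\mathbf c-\mathbf d)$ over distinct codewords. A linear subspace of the $\mathrm{GF}(q^m)$-vector space $\mathrm{GF}(q^m)^n$ is elementary if it has a basis consisting of vectors in $\mathrm{GF}(q)^n$. The projection of $\mathbf x$ onto $\mathcal K$ along $\bar{\mathcal K}$ is the unique $\mathbf x_{\mathcal K}\in\mathcal K$ with $\mathbf x-\mathbf x_{\mathcal K}\in\bar{\mathcal K}$. *)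

(* Defs.v *)
(* GF(q) = F : finFieldType (q = #|F|, automatically a prime power);
   GF(q^m) = L : fieldExtType F with m = \dim {:L} over F. *)
From HB Require Import structures.
From mathcomp Require Import all_boot all_order all_algebra all_field.
Set Implicit Arguments. Unset Strict Implicit. Unset Printing Implicit Defensive.
Import GRing.Theory.
Local Open Scope ring_scope.

Definition rk (F : fieldType) (L : fieldExtType F) (n : nat) (x : 'rV[L]_n) : nat :=
  \dim <<[seq x ord0 i | i <- enum 'I_n]>>%VS.

Definition min_rank_dist (F : fieldType) (L : fieldExtType F) (n : nat)
    (C : seq 'rV[L]_n) (d : nat) : Prop :=
  (forall c e, c \in C -> e \in C -> c != e -> (d <= rk (c - e))%N) /\
  (exists c e, [/\ c \in C, e \in C, c != e & rk (c - e) = d]).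

(* An L-linear subspace of L^n (row space of the square matrix K) is elementary
   if it has a basis of vectors in F^n. *)
Definition elementary (F : fieldType) (L : fieldExtType F) (n : nat) (K : 'M[L]_n) : Prop :=
  exists r (B : 'M[F]_(r, n)),
    row_free (map_mx (in_alg L) B) /\ (K == map_mx (in_alg L) B)%MS.

(* Main.v *)
Require Import Defs.
From HB Require Import structures.
From mathcomp Require Import all_boot all_order all_algebra all_field.
Import GRing.Theory.
Local Open Scope ring_scope.

Lemma rk_elem (F : fieldType) (L : fieldExtType F) (n r : nat)
   (B : 'M[F]_(r, n)) (a : 'rV[L]_r) :
  (rk (a *m map_mx (in_alg L) B) <= r)%N.
Proof.
rewrite /rk; apply: leq_trans (_ : \dim <<[seq a ord0 i | i <- enum 'I_r]>> <= r)%N.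
  apply: dimvS; apply/span_subvP => x /mapP [j _ ->].
  rewrite !mxE; apply: rpred_sum => i _.
  rewrite mxE /= -[_ * _]/(_ * (_ *: 1)) mulrC -scalerAl mul1r.
  by apply: rpredZ; apply: memv_span; apply: map_f; rewrite mem_enum.
by apply: leq_trans (dim_span _) _; rewrite size_map size_enum_ord.
Qed.

Lemma proj_inj (F : fieldType) (L : fieldExtType F) (n k : nat)
    (C : seq 'rV[L]_n) (K Kbar : 'M[L]_n) :
  (k <= n)%N ->
  min_rank_dist C (n - k + 1) ->
  elementary Kbar -> \rank Kbar = (n - k)%N ->
  mxdirect (K + Kbar) -> (K + Kbar :=: 1%:M)%MS ->
  {in C &, injective (fun c => c *m proj_mx K Kbar)}.
Proof.
move=> kn [md _] [r [B [fB eqB]]] rKb /mxdirect_addsP dKK eqKK c e cC eC ceq.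
apply/eqP; apply: contraT => ne; have := md c e cC eC ne.
set x := c - e.
have x0 : x *m proj_mx K Kbar = 0 by rewrite /x mulmxBl ceq subrr.
have xKb : (x <= Kbar)%MS.
  have := add_proj_mx dKK (_ : (x <= K + Kbar)%MS).
  rewrite x0 add0r => <-; first exact: proj_mx_sub.
  by rewrite eqKK submx1.
have : (x <= map_mx (in_alg L) B)%MS by rewrite -(eqmxP eqB).
case/submxP => a ->.
have rr : r = (n - k)%N by rewrite -rKb (eqmxP eqB); apply/esym/eqP.
move=> H; have := leq_trans H (@rk_elem _ _ _ _ B a); rewrite rr addn1 ltnn //.
Qed.

Theorem lemma5 (F : finFieldType) (L : fieldExtType F) (n k : nat)
    (C : seq 'rV[L]_n) (K Kbar : 'M[L]_n) :
  (n <= \dim {:L})%N ->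
  (1 <= k <= n)%N ->
  uniq C ->
  size C = (#|F| ^ (\dim {:L} * k))%N ->
  min_rank_dist C (n - k + 1) ->
  elementary K -> \rank K = k ->
  elementary Kbar -> \rank Kbar = (n - k)%N ->
  mxdirect (K + Kbar) -> (K + Kbar :=: 1%:M)%MS ->
  forall w : 'rV[L]_n, (w <= K)%MS ->
    exists! c : 'rV[L]_n, c \in C /\ c *m proj_mx K Kbar = w.
Proof.
move=> nm /andP[k1 kn] uC sC md _ rK eKb rKb dKK eqKK w wK.
have inj := @proj_inj _ _ _ _ C K Kbar kn md eKb rKb dKK eqKK.
set P := proj_mx K Kbar in inj *.
pose LT := finvect_type L.
pose RB := row_base K.
pose S := [set u : 'rV[LT]_(\rank K) | has (fun c => c *m P == (u : 'rV[L]__) *m RB) C].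
pose g (c : 'rV[L]_n) : 'rV[LT]_(\rank K) := c *m P *m pinvmx RB.
have gK c : (g c : 'rV[L]__) *m RB = c *m P.
  by rewrite mulmxKpV // (eq_row_base K) proj_mx_sub.
have cardLT : #|LT| = (#|F| ^ \dim {:L})%N.
  by rewrite -(card_vspacef (Vector.class LT)) card_vspace.
have ST : S = setT.
  apply/eqP; rewrite eqEcard subsetT /= cardsT card_mx cardLT mul1n -expnM.
  rewrite -rK in sC; rewrite -sC.
  have ug : uniq (map g C).
    rewrite map_inj_in_uniq // => c e cC eC gce.
    by apply: inj => //; rewrite -!gK gce.
  rewrite -(size_map g) -(card_uniqP ug); apply: subset_leq_card.
  apply/subsetP => u /mapP [c cC ->]; rewrite inE; apply/hasP; exists c => //.
  by rewrite gK.
pose u : 'rV[LT]_(\rank K) := w *m pinvmx RB.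
have : u \in S by rewrite ST inE.
rewrite inE => /hasP [c cC /eqP cP].
exists c; split.
  by split => //; rewrite cP mulmxKpV // (eq_row_base K).
by move=> e [eC eP]; apply: inj => //; rewrite cP eP mulmxKpV // (eq_row_base K).
Qed.
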